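(* Let $G$ be a connected graph, let $\delta$ be a real with $0<\delta<3/2$, and let $T$ be a nice shortest $\delta$-tour in $G$ that stops at at least $3$ points. Then $G$ admits a vertex cover of size at most $\ell(T)/s_\delta+1$.
   Context: Continuous graph model: for a connected simple graph $G$, each edge $uv$ is viewed as a unit-length interval whose endpoints are the vertices $u,v$. $P(G)$ is the set of all points $p(u,v,\lambda)$ for $uv\in E(G)$, $\lambda\in[0,1]$, where $p(u,v,\lambda)=p(v,u,1-\lambda)$, $p(u,v,0)=u$, $p(u,v,1)=v$. A walk is a finite sequence of points $(p_0,\dots,p_z)$ in which any two consecutive points are distinct and lie on a common edge $uv$, say $p_{i-1}=p(u,v,\lambda)$, $p_i=p(u,v,\mu)$; this step has length $|\lambda-\mu|$ and covers all points of that edge between them. The length $\ell$ of a walk is the sum of the lengths of its steps; $d(p,q)$ is the minimum length of a walk from $p$ to $q$. A tour is a walk $T=(p_0,\dots,p_z)$ with $p_0=p_z$; the points $p_0,\dots,p_z$ are its stopping points, and the points of the tour are all points covered by its steps. For $\delta\ge 0$, a $\delta$-tour is a tour $T$ such that every $p\in P(G)$ has distance at most $\delta$ from some point of $T$; a shortest $\delta$-tour is one of minimum length. $T$ traverses an edge $uv$ if $(u,v)$ or $(v,u)$ occurs as a pair of consecutive stopping points. A tour $T=(p_0,\dots,p_z)$ with $z\ge 3$ is nice if: (a) for every $i\in[z]$, at least one of $p_{i-1},p_i$ is a vertex; (b) for every $i\in[z]$ with $p_i$ not a vertex, $p_{i-1}=p_{(i+1)\bmod z}$; (c) for every edge $uv$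 there is at most one $i\in[z]$ with $p_i=p(u,v,\lambda)$ for some $\lambda\in(0,1)$; (d) if $T$ traverses $uv$, there is no $i$ with $p_i=p(u,v,\lambda)$, $\lambda\in(0,1)$; (e) every edge is traversed at most twice by $T$. $S_\delta=\{0,\ \delta-\lfloor\delta\rfloor,\ \tfrac12+\delta-\lfloor\tfrac12+\delta\rfloor,\ 2\delta-\lfloor2\delta\rfloor\}$ and $s_\delta=\min\{|s_1-s_2| : \{s_i,1-s_i\}\cap S_\delta\ne\emptyset\text{ for } i=1,2,\ s_1\notin\{s_2,1-s_2\}\}$. *)

(* Defs.v *)
From Stdlib Require Import Reals.
From mathcomp Require Import all_boot.

Set Implicit Arguments.
Unset Strict Implicit.
Unset Printing Implicit Defensive.

Local Open Scope R_scope.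

Section ContinuousGraph.
Variable V : finType.
Variable e : rel V.

(* A point of the continuous graph P(G) is represented by its barycentric
   coordinate function V -> R: p(u,v,lam) has coordinate 1-lam at u, lam at v
   and 0 elsewhere.  This representation makes the identifications
   p(u,v,lam) = p(v,u,1-lam), p(u,v,0) = u, p(u,v,1) = v hold as equalities. *)
Definition point := V -> R.

Definition pt (u v : V) (lam : R) : point :=
  fun x => if x == u then 1 - lam else if x == v then lam else 0.

Definition vtx (w : V) : point := fun x => if x == w then 1 else 0.

Definition in_PG (p : point) : Prop :=
  exists u v lam, e u v /\ 0 <= lam <= 1 /\ p = pt u v lam.

Definition is_vertex (p : point) : Prop := exists w, p = vtx w.

Definition interior (u v : V) (p : point) : Prop :=
  exists lam, 0 < lam < 1 /\ p = pt u v lam.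

Record step := Step { s_u : V; s_v : V; s_from : R; s_to : R }.

Definition step_src (s : step) : point := pt (s_u s) (s_v s) (s_from s).
Definition step_dst (s : step) : point := pt (s_u s) (s_v s) (s_to s).
Definition step_len (s : step) : R := Rabs (s_from s - s_to s).

Definition step_ok (s : step) : Prop :=
  e (s_u s) (s_v s) /\ 0 <= s_from s <= 1 /\ 0 <= s_to s <= 1 /\
  step_src s <> step_dst s.

Record walk := Walk { w_start : point; w_steps : seq step }.

Definition wz (w : walk) : nat := size (w_steps w).
Definition stops (w : walk) : seq point := w_start w :: map step_dst (w_steps w).
Definition stop (w : walk) (i : nat) : point := nth (w_start w) (stops w) i.
Definition wend (w : walk) : point := last (w_start w) (map step_dst (w_steps w)).

Fixpoint chain (p : point) (ss : seq step) : Prop :=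
  match ss with
  | [::] => True
  | s :: ss' => step_ok s /\ step_src s = p /\ chain (step_dst s) ss'
  end.

Definition is_walk (w : walk) : Prop := in_PG (w_start w) /\ chain (w_start w) (w_steps w).

Definition wlength (w : walk) : R := foldr Rplus 0 (map step_len (w_steps w)).

(* d(p,q) <= r : the minimum length of a walk from p to q is at most r
   (the minimum is attained, so this is: some walk from p to q has length <= r) *)
Definition dist_le (p q : point) (r : R) : Prop :=
  exists w, is_walk w /\ w_start w = p /\ wend w = q /\ wlength w <= r.

Definition is_tour (w : walk) : Prop := is_walk w /\ wend w = w_start w.

Definition on_tour (w : walk) (q : point) : Prop :=
  exists s, List.In s (w_steps w) /\
    exists nu, Rmin (s_from s) (s_to s) <= nu <= Rmax (s_from s) (s_to s) /\
               q = pt (s_u s) (s_v s) nu.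

Definition delta_tour (delta : R) (w : walk) : Prop :=
  is_tour w /\ forall p, in_PG p -> exists q, on_tour w q /\ dist_le p q delta.

Definition shortest_delta_tour (delta : R) (w : walk) : Prop :=
  delta_tour delta w /\ forall w', delta_tour delta w' -> wlength w <= wlength w'.

Definition traverses_at (w : walk) (u v : V) (i : nat) : Prop :=
  (stop w i.-1 = vtx u /\ stop w i = vtx v) \/
  (stop w i.-1 = vtx v /\ stop w i = vtx u).

Definition traverses (w : walk) (u v : V) : Prop :=
  exists i, (1 <= i <= wz w)%N /\ traverses_at w u v i.

Definition nice (w : walk) : Prop :=
  is_tour w /\ (3 <= wz w)%N /\
  (forall i, (1 <= i <= wz w)%N ->
     is_vertex (stop w i.-1) \/ is_vertex (stop w i)) /\
  (forall i, (1 <= i <= wz w)%N -> ~ is_vertex (stop w i) ->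
     stop w i.-1 = stop w ((i + 1) %% wz w)) /\
  (forall u v, e u v -> forall i j, (1 <= i <= wz w)%N -> (1 <= j <= wz w)%N ->
     interior u v (stop w i) -> interior u v (stop w j) -> i = j) /\
  (forall u v, e u v -> traverses w u v ->
     forall i, (i <= wz w)%N -> ~ interior u v (stop w i)) /\
  (forall u v, e u v -> forall i j k,
     (1 <= i)%N -> (i < j)%N -> (j < k)%N -> (k <= wz w)%N ->
     traverses_at w u v i -> traverses_at w u v j -> ~ traverses_at w u v k).

Definition stops_at_3_points (w : walk) : Prop :=
  exists i j k, (i <= wz w)%N /\ (j <= wz w)%N /\ (k <= wz w)%N /\
    stop w i <> stop w j /\ stop w i <> stop w k /\ stop w j <> stop w k.

Definition vertex_cover (C : {set V}) : Prop :=
  forall u v, e u v -> u \in C \/ v \in C.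

End ContinuousGraph.

(* S_delta, with x - floor x written frac_part x (Stdlib: x - IZR (Int_part x),
   Int_part = floor) *)
Definition in_S_delta (delta s : R) : Prop :=
  s = 0 \/ s = frac_part delta \/ s = frac_part (1/2 + delta) \/
  s = frac_part (2 * delta).

Definition adm_delta (delta s : R) : Prop := in_S_delta delta s \/ in_S_delta delta (1 - s).

Definition is_s_delta (delta s : R) : Prop :=
  (exists s1 s2, adm_delta delta s1 /\ adm_delta delta s2 /\ s1 <> s2 /\ s1 <> 1 - s2 /\
                 s = Rabs (s1 - s2)) /\
  (forall s1 s2, adm_delta delta s1 -> adm_delta delta s2 -> s1 <> s2 -> s1 <> 1 - s2 ->
                 s <= Rabs (s1 - s2)).

(* Main.v *)
Require Import Defs.
From Stdlib Require Import Reals Lra Classical.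
From mathcomp Require Import all_boot zify.
Open Scope R_scope.

Lemma frac_of (x : R) (n : Z) : IZR n <= x < IZR n + 1 -> frac_part x = x - IZR n.
Proof.
move=> [H1 H2]; rewrite /frac_part /Int_part.
have -> : up x = (n + 1)%Z.
  symmetry; apply: tech_up; rewrite plus_IZR /=; lra.
rewrite minus_IZR plus_IZR /=; lra.
Qed.

Lemma s_bounds (delta s : R) : 0 < delta < 3/2 -> is_s_delta delta s ->
  0 < s /\ s <= 1/2 /\ s <= 3/2 - delta.
Proof.
move=> Hd [[s1 [s2 [_ [_ [Hne [_ ->]]]]]] Hmin].
have Hpos : 0 < Rabs (s1 - s2) by apply: Rabs_pos_lt; lra.
have H12 : Rabs (s1 - s2) <= 1/2.
  have Hm := Hmin; move: Hm; set t := Rabs (s1 - s2) => Hm.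
  have A0 : adm_delta delta 0 by left; left.
  destruct (Rlt_or_le delta (1/2)) as [Hlt|Hge].
  - have F1 : frac_part delta = delta by rewrite (frac_of _ 0%Z) /=; lra.
    have F2 : frac_part (1/2 + delta) = 1/2 + delta by rewrite (frac_of _ 0%Z) /=; lra.
    destruct (Req_dec delta (1/4)) as [E|E].
    + have := Hm 0 delta A0 ltac:(left; right; left; lra) ltac:(lra) ltac:(lra).
      rewrite Rabs_left; lra.
    + have := Hm delta (1/2 + delta) ltac:(left; right; left; lra)
        ltac:(left; right; right; left; lra) ltac:(lra) ltac:(lra).
      rewrite Rabs_left; lra.
  - destruct (Rle_lt_or_eq_dec _ _ Hge) as [Hgt|Heq].
    + destruct (Rlt_or_le delta 1) as [Hl1|Hg1].
      * have F1 : frac_part delta = delta by rewrite (frac_of _ 0%Z) /=; lra.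
        have F2 : frac_part (1/2 + delta) = delta - 1/2 by rewrite (frac_of _ 1%Z) /=; lra.
        destruct (Req_dec delta (3/4)) as [E|E].
        -- have := Hm 0 (delta - 1/2) A0 ltac:(left; right; right; left; lra) ltac:(lra) ltac:(lra).
           rewrite Rabs_left; lra.
        -- have := Hm delta (delta - 1/2) ltac:(left; right; left; lra)
             ltac:(left; right; right; left; lra) ltac:(lra) ltac:(lra).
           rewrite Rabs_right; lra.
      * have F1 : frac_part delta = delta - 1 by rewrite (frac_of _ 1%Z) /=; lra.
        have F2 : frac_part (1/2 + delta) = delta - 1/2 by rewrite (frac_of _ 1%Z) /=; lra.
        destruct (Req_dec delta (5/4)) as [E|E].
        -- have := Hm 0 (delta - 1) A0 ltac:(left; right; left; lra) ltac:(lra) ltac:(lra).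
           rewrite Rabs_left; lra.
        -- have := Hm (delta - 1) (delta - 1/2) ltac:(left; right; left; lra)
             ltac:(left; right; right; left; lra) ltac:(lra) ltac:(lra).
           rewrite Rabs_left; lra.
    + have F1 : frac_part delta = 1/2 by rewrite (frac_of _ 0%Z) /=; lra.
      have := Hm 0 (1/2) A0 ltac:(left; right; left; lra) ltac:(lra) ltac:(lra).
      rewrite Rabs_left; lra.
split; first exact Hpos. split; first exact H12.
destruct (Rle_or_lt delta (1/2)) as [Hle|Hgt]; first by lra.
have F2 : frac_part (1/2 + delta) = delta - 1/2 by rewrite (frac_of _ 1%Z) /=; lra.
have A1 : adm_delta delta (3/2 - delta).
  right; right; right; left. lra.
have := Hmin (3/2 - delta) 0 A1 ltac:(left; left; lra)
   ltac:(lra) ltac:(lra).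
rewrite (Rabs_right (3/2 - delta - 0)); lra.
Qed.

Open Scope nat_scope.
Lemma all_same (V : finType) (stp : nat -> point V) (z : nat) (y : V) (j : nat) :
  (0 < z)%N -> (j <= z)%N -> stp j = vtx y ->
  (forall n, (n <= z)%N -> stp (n %% z)%N = stp n) ->
  (forall i, (1 <= i <= z)%N -> ~ is_vertex (stp i) -> stp i.-1 = stp ((i + 1) %% z)%N) ->
  (forall i, (1 <= i <= z)%N -> is_vertex (stp i.-1) -> is_vertex (stp i) ->
      stp i.-1 <> vtx y /\ stp i <> vtx y) ->
  forall k, (k <= z)%N -> is_vertex (stp k) -> stp k = vtx y.
Proof.
move=> z0 jz Hj Hmod Hb Hvv.
have Bk : forall d, (d <= j)%N -> forall k, (j - d <= k <= j)%N ->
    is_vertex (stp k) -> stp k = vtx y.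
  elim=> [|d IH] Hd k Hk.
    have -> : k = j by lia.
    by [].
  case: (leqP (j - d) k) => Hk2.
    apply: IH => //; lia.
  have Ek : k = (j - d.+1)%N by lia.
  move=> Hvk.
  case: (classic (is_vertex (stp k.+1))) => Hv1.
    have E1 : stp k.+1 = vtx y by apply: IH => //; lia.
    have := Hvv k.+1 ltac:(lia) Hvk Hv1; rewrite E1 => -[_ H]; by case: H.
  have := Hb k.+1 ltac:(lia) Hv1; rewrite /= addn1 Hmod; last first.
    have : k.+1 != j by apply/eqP => E; apply: Hv1; rewrite E Hj; exists y.
    lia.
  move=> E2; rewrite E2; apply: IH; [lia| |by rewrite -E2].
  have : k.+1 != j by apply/eqP => E; apply: Hv1; rewrite E Hj; exists y.
  lia.
have Fk : forall d, (j + d <= z)%N -> forall k, (j <= k <= j + d)%N ->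
    is_vertex (stp k) -> stp k = vtx y.
  elim=> [|d IH] Hd k Hk.
    have -> : k = j by lia.
    by [].
  case: (leqP k (j + d)) => Hk2.
    apply: IH => //; lia.
  have Ek : k = (j + d).+1 by lia.
  move=> Hvk; subst k.
  case: (classic (is_vertex (stp (j + d)))) => Hv0.
    have E0 : stp (j + d) = vtx y by apply: IH => //; lia.
    have := Hvv (j + d).+1 ltac:(lia) Hv0 Hvk; rewrite /= E0 => -[H _]; by case: H.
  have Hne : (j + d)%N != j by apply/eqP => E; apply: Hv0; rewrite E Hj; exists y.
  have := Hb (j + d) ltac:(lia) Hv0; rewrite Hmod; last by lia.
  rewrite addn1 => E2; rewrite -E2; apply: IH; [lia| lia | by rewrite E2].
move=> k kz Hk.
case: (leqP k j) => Hkj.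
  apply: (Bk (j - k)%N) => //; lia.
apply: (Fk (k - j)%N) => //; lia.
Qed.
Open Scope R_scope.

Section S.
Variables (V : finType) (e : rel V).

Definition fm (u v : V) (p : point V) : R := 3/2 - p u - p v - Rmin (p u) (p v).

Lemma vtx_inj (y1 y2 : V) : vtx y1 = vtx y2 -> y1 = y2.
Proof.
move=> H; have := f_equal (fun p => p y1) H; rewrite /vtx eqxx.
case: eqP => // _; lra.
Qed.

Lemma vertex_pt (a b w : V) t : a != b -> pt a b t = vtx w ->
  (t = 0 /\ w = a) \/ (t = 1 /\ w = b).
Proof.
move=> nab H.
have Ha := f_equal (fun p => p a) H; have Hb := f_equal (fun p => p b) H.
have nba : b != a by rewrite eq_sym.
move: Ha Hb; rewrite /pt /vtx !eqxx (negbTE nba) /=.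
case: (a =P w) => [->|naw] Ha.
  left; split => //; lra.
case: (b =P w) => [->|nbw] Hb; first by right; split => //; lra.
lra.
Qed.

Lemma fm_lip (u v a b : V) t1 t2 : u != v -> a != b ->
  0 <= t1 <= 1 -> 0 <= t2 <= 1 ->
  fm u v (pt a b t2) - fm u v (pt a b t1) <= Rabs (t1 - t2).
Proof.
move=> nuv nab H1 H2; rewrite /fm /pt.
case: (u =P a) => [Eua|Nua]; case: (u =P b) => [Eub|Nub];
case: (v =P a) => [Eva|Nva]; case: (v =P b) => [Evb|Nvb];
  try (subst; rewrite ?eqxx in nuv nab; done);
  rewrite /Rmin; repeat (destruct Rle_dec); rewrite /Rabs; destruct Rcase_abs; lra.
Qed.

Lemma fm_chain (u v : V) p ss : irreflexive e -> u != v -> chain e p ss ->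
  fm u v (last p (map (@step_dst V) ss)) - fm u v p <= foldr Rplus 0 (map (@step_len V) ss).
Proof.
move=> irr nuv; elim: ss p => [|s ss IH] p /=; first lra.
move=> [[Hab [Hf [Ht _]]] [Hsrc Hc]].
have nab : s_u s != s_v s by apply/eqP => E; move: Hab; rewrite E irr.
have := IH _ Hc; have := fm_lip _ _ _ _ (s_from s) (s_to s) nuv nab Hf Ht.
rewrite /step_len -Hsrc /step_src /step_dst; lra.
Qed.

Lemma chain_ok p ss i d : chain e p ss -> (i < size ss)%N -> step_ok e (nth d ss i).
Proof.
elim: ss p i => [|s ss IH] p i //= [Hok [_ Hc]].
case: i => [|i] //= Hi; exact: IH Hc Hi.
Qed.

Lemma chain_src p ss i d : chain e p ss -> (i < size ss)%N ->
  step_src (nth d ss i) = nth p (p :: map (@step_dst V) ss) i.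
Proof.
elim: ss p i => [|s ss IH] p i /=; first by move=> _.
move=> [Hok [Hs Hc]].
case: i => [|i] //= Hi.
rewrite (IH _ _ Hc Hi) /=.
case: i Hi => [|i] Hi //=.
apply: set_nth_default; rewrite size_map; lia.
Qed.

Lemma In_nth_ex (T : Type) (st : T) ss : List.In st ss ->
  exists i, (i < size ss)%N /\ nth st ss i = st.
Proof.
elim: ss => [|x ss IH] //= [->|H]; first by exists 0%N.
have [i [Hi E]] := IH H; by exists i.+1.
Qed.

End S.
Arguments fm {V}.

Section S4.
Variables (V : finType).


Definition far (st : step V) : V :=
  if Req_EM_T (s_from st) 0 then s_v st
  else if Req_EM_T (s_to st) 0 then s_v st else s_u st.

Definition cset (s : R) (st : step V) : seq V :=
  if Rle_dec (2 * s) (step_len st) then [:: s_u st; s_v st]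
  else if Rle_dec s (step_len st) then [:: far st] else [::].

Lemma size_cset s st : 0 < s -> INR (size (cset s st)) * s <= step_len st.
Proof.
move=> s0; have := Rabs_pos (s_from st - s_to st); rewrite /cset /step_len.
destruct Rle_dec; first by (simpl; lra).
destruct Rle_dec; simpl; lra.
Qed.

Lemma sum_cset s ss : 0 < s ->
  INR (size (flatten (map (cset s) ss))) * s <= foldr Rplus 0 (map (@step_len V) ss).
Proof.
move=> s0; elim: ss => [|st ss IH] /=; first lra.
rewrite size_cat plus_INR; have := size_cset s st s0; lra.
Qed.

Lemma mem_flat s ss st x : List.In st ss -> x \in cset s st ->
  x \in flatten (map (cset s) ss).
Proof.
elim: ss => [|y ss IH] //= [->|H] Hx; rewrite mem_cat ?Hx //.
by rewrite IH ?orbT.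
Qed.

Lemma cset_mem s st x : 0 < s -> s <= step_len st ->
  (2 * s <= step_len st \/ far st = x) -> (x = s_u st \/ x = s_v st) ->
  x \in cset s st.
Proof.
move=> s0 Hl H Hx; rewrite /cset.
destruct Rle_dec as [H2|H2].
  by case: Hx => ->; rewrite !inE eqxx ?orbT.
destruct Rle_dec as [H3|H3]; last lra.
case: H => [H|<-]; first lra.
by rewrite inE.
Qed.

Lemma pt_a (a b : V) t : pt a b t a = 1 - t.
Proof. by rewrite /pt eqxx. Qed.
Lemma pt_b (a b : V) t : a != b -> pt a b t b = t.
Proof. by move=> nab; rewrite /pt eq_sym (negbTE nab) eqxx. Qed.
Lemma pt_o {a b x : V} {t : R} : x != a -> x != b -> pt a b t x = 0.
Proof. by move=> H1 H2; rewrite /pt (negbTE H1) (negbTE H2). Qed.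

Lemma key0 (a b : V) fr to nu s :
  0 < s -> 0 <= fr <= 1 -> 0 <= to <= 1 -> (fr = 0 \/ to = 0) ->
  nu <= Rmax fr to -> s <= nu -> b \in cset s (Step a b fr to).
Proof.
move=> s0 Hf Ht H0 Hnu Hs.
have Hl : s <= step_len (Step a b fr to).
  move: Hnu; rewrite /step_len /Rmax /=; destruct Rle_dec; case: H0 => E; rewrite E /Rabs;
  destruct Rcase_abs; lra.
have Hfar : far (Step a b fr to) = b.
  rewrite /far /=; destruct (Req_dec_T fr 0) => //; destruct (Req_dec_T to 0) => //.
  exfalso; case: H0; lra.
by apply: (cset_mem _ _ _ s0 Hl (or_intror Hfar)); right.
Qed.

Lemma key1 (a b : V) fr to nu s :
  0 < s -> s <= 1/2 -> 0 <= fr <= 1 -> 0 <= to <= 1 -> (fr = 1 \/ to = 1) ->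
  Rmin fr to <= nu -> s <= 1 - nu -> a \in cset s (Step a b fr to).
Proof.
move=> s0 s12 Hf Ht H1 Hnu Hs.
have Hl : s <= step_len (Step a b fr to).
  move: Hnu; rewrite /step_len /Rmin /=; destruct Rle_dec; case: H1 => E; rewrite E /Rabs;
  destruct Rcase_abs; lra.
have Hfar : 2 * s <= step_len (Step a b fr to) \/ far (Step a b fr to) = a.
  rewrite /far /step_len /=; destruct (Req_dec_T fr 0) as [E0|E0].
    left; case: H1 => E1; rewrite E0 ?E1 /Rabs; destruct Rcase_abs; lra.
  destruct (Req_dec_T to 0) as [E2|E2]; last by right.
  left; case: H1 => E1; rewrite E2 ?E1 /Rabs; destruct Rcase_abs; lra.
by apply: (cset_mem _ _ _ s0 Hl Hfar); left.
Qed.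

Lemma key (u v a b : V) fr to nu s delta :
  u != v -> a != b -> 0 <= fr <= 1 -> 0 <= to <= 1 ->
  Rmin fr to <= nu <= Rmax fr to -> fm u v (pt a b nu) <= delta -> delta < 3/2 ->
  0 < s -> s <= 1/2 -> s <= 3/2 - delta ->
  (((fr = 0 \/ to = 0) /\ a != u /\ a != v) \/ ((fr = 1 \/ to = 1) /\ b != u /\ b != v)) ->
  u \in cset s (Step a b fr to) \/ v \in cset s (Step a b fr to).
Proof.
move=> nuv nab Hf Ht [Hnu1 Hnu2] Hfm Hd s0 s12 s32 Hcase.
have nvu : v != u by rewrite eq_sym.
have nba : b != a by rewrite eq_sym.
have Hnu0 : 0 <= nu <= 1.
  move: Hnu1 Hnu2; rewrite /Rmin /Rmax; destruct Rle_dec; lra.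
case: Hcase => [[H0 [nau nav]]|[H1 [nbu nbv]]].
- have nua : u != a by rewrite eq_sym.
  have nva : v != a by rewrite eq_sym.
  case: (u =P b) => [Eub|Nub].
    subst b; left; move: Hfm; rewrite /fm pt_b // (pt_o nva nvu) /Rmin.
    destruct Rle_dec => Hfm; try lra.
    apply: (key0 _ _ _ _ _ _ s0 Hf Ht H0 Hnu2); lra.
  case: (v =P b) => [Evb|Nvb].
    subst b; right; move: Hfm; rewrite /fm pt_b // (pt_o nua (introN eqP Nub)) /Rmin.
    destruct Rle_dec => Hfm; try lra.
    apply: (key0 _ _ _ _ _ _ s0 Hf Ht H0 Hnu2); lra.
  move: Hfm; rewrite /fm (pt_o nua (introN eqP Nub)) (pt_o nva (introN eqP Nvb)) /Rmin.
  destruct Rle_dec; lra.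
- have nub : u != b by rewrite eq_sym.
  have nvb : v != b by rewrite eq_sym.
  case: (u =P a) => [Eua|Nua].
    subst a; left; move: Hfm; rewrite /fm pt_a (pt_o nvu nvb) /Rmin.
    destruct Rle_dec => Hfm; try lra.
    apply: (key1 _ _ _ _ _ _ s0 s12 Hf Ht H1 Hnu1); lra.
  case: (v =P a) => [Eva|Nva].
    subst a; right; move: Hfm; rewrite /fm pt_a (pt_o (introN eqP Nua) nub) /Rmin.
    destruct Rle_dec => Hfm; try lra.
    apply: (key1 _ _ _ _ _ _ s0 s12 Hf Ht H1 Hnu1); lra.
  move: Hfm; rewrite /fm (pt_o (introN eqP Nua) nub) (pt_o (introN eqP Nva) nvb) /Rmin.
  destruct Rle_dec; lra.
Qed.
End S4.

Arguments vtx_inj {V}. Arguments vertex_pt {V}. Arguments pt_a {V}.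
Arguments pt_b {V}. Arguments key {V}. Arguments mem_flat {V}. Arguments sum_cset {V}.
Arguments cset {V}. Arguments far {V}. Arguments cset_mem {V}.

Lemma nth_In_seq (T : Type) (d : T) ss k : (k < size ss)%N -> List.In (nth d ss k) ss.
Proof.
elim: ss k => [|x ss IH] [|k] //= Hk; first by left.
right; exact: IH.
Qed.

Lemma trav_cset (V : finType) s (st : step V) : 0 < s -> s <= 1/2 ->
  (s_from st = 0 \/ s_from st = 1) -> (s_to st = 0 \/ s_to st = 1) ->
  s_from st <> s_to st -> cset s st = [:: s_u st; s_v st].
Proof.
move=> s0 s12 H1 H2 Hne; rewrite /cset.
destruct Rle_dec as [|N] => //; exfalso; apply: N.
rewrite /step_len /Rabs; destruct Rcase_abs; case: H1 => E1; case: H2 => E2; lra.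
Qed.

Theorem mainTheorem18 (V : finType) (e : rel V) (delta s : R) (T : walk V) :
  symmetric e -> irreflexive e -> (forall u v, connect e u v) ->
  0 < delta < 3/2 ->
  shortest_delta_tour e delta T -> nice e T -> stops_at_3_points T ->
  is_s_delta delta s ->
  exists C : {set V}, vertex_cover e C /\
    INR #|C| <= wlength T / s + 1.
Proof.
move=> sym irr conn Hd [[HT Hcov] Hshort] Hnice H3 Hs.
have [s0 [s12 s32]] := s_bounds _ _ Hd Hs.
case: HT => [[HPG Hch] Hend].
case: Hnice => [_ [Hz3 [Ha [Hb [_ [_ _]]]]]].
have Hsrc : forall i d, (i < wz T)%N -> step_src (nth d (w_steps T) i) = stop T i.
  move=> i d Hi; exact: (@chain_src V e _ _ i d Hch Hi).
have Hdst : forall i d, (i < wz T)%N -> step_dst (nth d (w_steps T) i) = stop T i.+1.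
  move=> i d Hi; by rewrite /stop /stops /= (nth_map d).
have Hok : forall i d, (i < wz T)%N -> step_ok e (nth d (w_steps T) i).
  move=> i d Hi; exact: (@chain_ok V e _ _ i d Hch Hi).
have nab_of : forall st : step V, step_ok e st -> s_u st != s_v st.
  move=> st [Hab _]; apply/eqP => E; move: Hab; by rewrite E irr.
have z0 : (0 < wz T)%N by lia.
have Hmod : forall n, (n <= wz T)%N -> stop T (n %% wz T)%N = stop T n.
  move=> n Hn; case: (ltnP n (wz T)) => H; first by rewrite modn_small.
  have -> : n = wz T by lia.
  rewrite modnn.
  have -> : stop T (wz T) = last (w_start T) (stops T).
    by rewrite /stop -nth_last /stops /= size_map.
  rewrite /stop /stops /=; symmetry; exact: Hend.
have [i0 [x0 [Hi0 Hx0]]] : exists i0 x0, (i0 <= wz T)%N /\ stop T i0 = vtx x0.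
  case: (Ha 1%N ltac:(lia)) => /= [[x Ex]|[x Ex]]; first by exists 0%N, x.
  by exists 1%N, x; split => //; lia.
set L := x0 :: flatten (map (cset s) (w_steps T)).
have inL : forall st x, List.In st (w_steps T) -> x \in cset s st -> x \in L.
  move=> st x Hin Hx; rewrite inE; apply/orP; right; exact: (@mem_flat V s _ _ _ Hin Hx).
have HVV : forall i y1 y2, (1 <= i <= wz T)%N -> stop T i.-1 = vtx y1 -> stop T i = vtx y2 ->
    y1 \in L /\ y2 \in L.
  move=> i y1 y2 Hi E1 E2.
  have Hi' : (i.-1 < wz T)%N by lia.
  have Hin := @nth_In_seq _ (Step y1 y1 0 0) _ _ Hi'.
  have Hk := Hok _ (Step y1 y1 0 0) Hi'.
  have S1 := Hsrc _ (Step y1 y1 0 0) Hi'.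
  have S2 := Hdst _ (Step y1 y1 0 0) Hi'.
  have Ei1 : i.-1.+1 = i by lia.
  rewrite Ei1 in S2.
  move: Hin Hk S1 S2; case: (nth _ _ _) => a b fr to Hin Hk S1 S2.
  have nab := nab_of _ Hk.
  case: Hk => [_ [Hf [Ht Hne]]].
  rewrite E1 in S1; rewrite E2 in S2.
  have V1 := @vertex_pt V a b y1 fr nab S1.
  have V2 := @vertex_pt V a b y2 to nab S2.
  have Hne' : fr <> to by move=> E; apply: Hne; rewrite /step_src /step_dst /= E.
  have Hc : cset s (Step a b fr to) = [:: a; b].
    apply: trav_cset => //=.
      by case: V1 => [[? _]|[? _]]; [left|right].
    by case: V2 => [[? _]|[? _]]; [left|right].
  split; apply: (inL _ _ Hin); rewrite Hc !inE.
    by case: V1 => [[_ ->]|[_ ->]]; rewrite eqxx ?orbT.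
  by case: V2 => [[_ ->]|[_ ->]]; rewrite eqxx ?orbT.
have HW : forall j y, (j <= wz T)%N -> stop T j = vtx y -> y \in L.
  move=> j y Hj Ey.
  case: (classic (exists i, (1 <= i <= wz T)%N /\ is_vertex (stop T i.-1) /\
      is_vertex (stop T i) /\ (stop T i.-1 = vtx y \/ stop T i = vtx y))).
    move=> [i [Hi [[y1 E1] [[y2 E2] Hor]]]].
    have [L1 L2] := HVV i y1 y2 Hi E1 E2.
    case: Hor => E; [rewrite E1 in E | rewrite E2 in E]; by rewrite -(@vtx_inj V _ _ E).
  move=> Hno.
  have Hneg : forall i, (1 <= i <= wz T)%N -> is_vertex (stop T i.-1) -> is_vertex (stop T i) ->
      stop T i.-1 <> vtx y /\ stop T i <> vtx y.
    move=> i Hi V1 V2; split => E; apply: Hno; exists i; do 3 (split => //); by [left|right].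
  have := @all_same V (stop T) (wz T) y j z0 Hj Ey Hmod Hb Hneg i0 Hi0 (ex_intro _ x0 Hx0).
  rewrite Hx0 => /(@vtx_inj V _ _) <-; by rewrite /L inE eqxx.
exists [set x in L]; split.
  move=> u v Huv.
  have nuv : u != v by apply/eqP => E; move: Huv; rewrite E irr.
  rewrite !inE.
  case Hu: (u \in L); first by left.
  case Hv: (v \in L); first by right.
  exfalso.
  have Hm : in_PG e (pt u v (1/2)) by exists u, v, (1/2); split; first done; split; [lra|done].
  have [q [[st [Hin [nu [Hnu Eq]]]] [wk [[_ Hchw] [Hws [Hwe Hwl]]]]]] := Hcov _ Hm.
  have Fm : fm u v (pt u v (1/2)) = 0.
    rewrite /fm pt_a pt_b // /Rmin; destruct Rle_dec; lra.
  have Hfq : fm u v q <= delta.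
    have := @fm_chain V e u v _ _ irr nuv Hchw.
    rewrite /wend in Hwe; rewrite Hwe Hws Fm; rewrite /wlength in Hwl; lra.
  have [i [Hi Ei]] := @In_nth_ex _ st _ Hin.
  have Hk := Hok i st Hi; rewrite Ei in Hk.
  have S1 := Hsrc i st Hi; rewrite Ei in S1.
  have S2 := Hdst i st Hi; rewrite Ei in S2.
  have Hav := Ha i.+1 ltac:(rewrite /wz; lia); rewrite /= in Hav.
  clear Ei; move: Hin Hk S1 S2 Hnu Eq; case: st => a b fr to Hin Hk S1 S2 Hnu Eq.
  rewrite /= in Hnu Eq; rewrite Eq in Hfq.
  have nab := nab_of _ Hk.
  case: Hk => [_ [Hf [Ht _]]].
  have notL : forall w, w \in L -> w != u /\ w != v.
    move=> w wL; split; apply/eqP => E; [by rewrite E Hu in wL | by rewrite E Hv in wL].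
  have Hkey : forall x, x \in cset s (Step a b fr to) -> x \in L := fun x => inL _ x Hin.
  have Fin : u \in cset s (Step a b fr to) \/ v \in cset s (Step a b fr to).
    apply: (@key V _ _ _ _ _ _ _ _ _ nuv nab Hf Ht Hnu Hfq ltac:(lra) s0 s12 s32).
    case: Hav => [[w Ew]|[w Ew]].
      have [wu wv] := notL w (HW i w (ltnW Hi) Ew).
      rewrite -S1 in Ew; case: (@vertex_pt V a b w fr nab Ew) => [[E1 E2]|[E1 E2]].
        by left; subst w; split; [left|split].
      by right; subst w; split; [left|split].
    have [wu wv] := notL w (HW i.+1 w Hi Ew).
    rewrite -S2 in Ew; case: (@vertex_pt V a b w to nab Ew) => [[E1 E2]|[E1 E2]].
      by left; subst w; split; [right|split].
    by right; subst w; split; [right|split].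
  by case: Fin => /Hkey; rewrite ?Hu ?Hv.
have Hc0 : (#|[set x in L]| <= size L)%N by rewrite cardsE; apply: card_size.
have Hc : INR #|[set x in L]| <= INR (size L) by apply: le_INR; apply/leP.
have Hsum := @sum_cset V s (w_steps T) s0.
have Hdiv : INR (size (flatten (map (cset s) (w_steps T)))) <= wlength T / s.
  apply: (Rmult_le_reg_r s) => //.
  rewrite /Rdiv Rmult_assoc Rinv_l; last lra.
  rewrite /wlength; lra.
have EL : size L = (size (flatten (map (cset s) (w_steps T)))).+1 by [].
rewrite EL S_INR in Hc. lra.
Qed.
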